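(* Let $G=(V,E)$ be a finite simple connected graph without isolated vertices which has two different vertices $u$ and $v$ satisfying $N[u]\subseteq N[v]$. Then Dom has a winning strategy in the Dom-start Disjoint Domination Game played on $G$.
   Context: For a vertex $v$, $N[v]$ denotes its closed neighborhood. The Disjoint Domination Game on an isolate-free graph $G$ is played by Dom and Sepy with colors $p$ and $b$; $V_p,V_b$ denote the current sets of vertices of each color. Players alternate; either player may use either color. A move chooses a vertex $v$ and a color $c$ such that (i) $v$ is uncolored and (ii) some $w\in N[v]$ satisfies $N[w]\cap V_c=\emptyset$ (before the move); then $v$ gets color $c$. A player must make a legal move on his turn (no passing). The game ends as soon as either (s* ) some vertex $x$ has $N[x]\subseteq V_p$ or $N[x]\subseteq V_b$ — Sepy wins; or (d* ) both $V_p$ and $V_b$ are dominating sets of $G$ — Dom wins. In the Dom-start game Dom moves first. *)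

(* Defs.v *)
From mathcomp Require Import all_boot.
Set Implicit Arguments. Unset Strict Implicit. Unset Printing Implicit Defensive.

Section DDG.
Variables (T : finType) (e : rel T).

Definition Nc (v : T) : {set T} := [set w | (w == v) || e v w].

(* color c: true = p, false = b.  Move (v, c) is legal w.r.t. (Vp, Vb) iff
   v is uncolored and some w in N[v] has N[w] disjoint from V_c. *)
Definition legal (Vp Vb : {set T}) (v : T) (c : bool) : bool :=
  (v \notin Vp :|: Vb) &&
  [exists w in Nc v, [disjoint Nc w & (if c then Vp else Vb)]].

Definition sepy_end (Vp Vb : {set T}) : bool :=
  [exists x, (Nc x \subset Vp) || (Nc x \subset Vb)].

Definition dominating (D : {set T}) : bool :=
  [forall x, ~~ [disjoint Nc x & D]].

Definition dom_end (Vp Vb : {set T}) : bool := dominating Vp && dominating Vb.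

End DDG.

(* DomWins e Vp Vb t : from the position with color classes Vp, Vb and
   Dom to move iff t = true, Dom has a winning strategy. Least fixed point
   (the game is finite). (s-star) is checked first. *)
Inductive DomWins (T : finType) (e : rel T) :
  {set T} -> {set T} -> bool -> Prop :=
| DW_end Vp Vb t :
    ~~ sepy_end e Vp Vb -> dom_end e Vp Vb -> DomWins e Vp Vb t
| DW_dom Vp Vb :
    ~~ sepy_end e Vp Vb -> ~~ dom_end e Vp Vb ->
    (exists (v : T) (c : bool), legal e Vp Vb v c /\
       DomWins e (if c then v |: Vp else Vp) (if c then Vb else v |: Vb) false) ->
    DomWins e Vp Vb true
| DW_sepy Vp Vb :
    ~~ sepy_end e Vp Vb -> ~~ dom_end e Vp Vb ->
    (forall (v : T) (c : bool), legal e Vp Vb v c ->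
       DomWins e (if c then v |: Vp else Vp) (if c then Vb else v |: Vb) true) ->
    DomWins e Vp Vb false.

(* Main.v *)
Require Import Defs.
From mathcomp Require Import all_boot.
Set Implicit Arguments. Unset Strict Implicit. Unset Printing Implicit Defensive.

Section Proof8.
Variables (T : finType) (e : rel T).
Hypothesis sym : symmetric e.
Hypothesis irr : irreflexive e.
Hypothesis conn : forall x y : T, connect e x y.
Hypothesis noiso : forall x : T, exists y : T, e x y.
Variables u v : T.
Hypothesis uv : u != v.
Hypothesis Nuv : Nc e u \subset Nc e v.
Implicit Types (P B S : {set T}) (x y z w : T).

Definition hasC (S : {set T}) z := ~~ [disjoint Nc e z & S].
Definition bi P B z := hasC P z && hasC B z.

Lemma Nc_refl x : x \in Nc e x.
Proof. by rewrite inE eqxx. Qed.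

Lemma Nc_sym x y : (y \in Nc e x) = (x \in Nc e y).
Proof. by rewrite !inE eq_sym sym. Qed.

Lemma hasCP (S : {set T}) z : reflect (exists2 y, y \in Nc e z & y \in S) (hasC S z).
Proof.
rewrite /hasC -setI_eq0; apply: (iffP (set0Pn _)) => [[y /setIP[]]|[y ? ?]].
  by exists y.
by exists y; apply/setIP.
Qed.

Lemma hasC_mono (S S' : {set T}) z : S \subset S' -> hasC S z -> hasC S' z.
Proof. by move=> /subsetP sS /hasCP[y ? ?]; apply/hasCP; exists y => //; apply: sS. Qed.

Lemma legalP (P B : {set T}) x c : reflect (x \notin P :|: B /\ exists2 w, w \in Nc e x &
   ~~ hasC (if c then P else B) w) (legal e P B x c).
Proof.
rewrite /legal; apply: (iffP andP) => [[? /exists_inP[w ? ?]]|[? [w ? Hw]]].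
  by split => //; exists w => //; rewrite /hasC negbK.
by split => //; apply/exists_inP; exists w => //; rewrite /hasC negbK in Hw *.
Qed.


Lemma disjP (A B : {set T}) :
  reflect (forall z, z \in A -> z \in B -> False) [disjoint A & B].
Proof.
rewrite -setI_eq0; apply: (iffP eqP) => [AB z zA zB|H].
  have : z \in A :&: B by rewrite inE zA zB.
  by rewrite AB inE.
by apply/setP => z; rewrite !inE; apply/negP => /andP[zA zB]; apply: (H z).
Qed.

Lemma u_in_Nv : u \in Nc e v.
Proof. exact: (subsetP Nuv _ (Nc_refl u)). Qed.

Lemma v_in_Nu : v \in Nc e u.
Proof. by rewrite Nc_sym u_in_Nv. Qed.

Definition OKb P B z := bi P B z || ((z == v) && (u \notin P :|: B)).
Definition Good P B := [/\ [disjoint P & B], v \in P &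
   forall z, z \in P :|: B -> OKb P B z].

Lemma ok_not_mono P B z : [disjoint P & B] -> OKb P B z ->
  ~~ (Nc e z \subset P) /\ ~~ (Nc e z \subset B).
Proof.
move=> /disjP dPB /orP[/andP[/hasCP[y yN yP] /hasCP[w wN wB]]|/andP[/eqP -> un]].
  split; apply/negP => /subsetP s.
    by apply: (dPB w) => //; apply: s.
  by apply: (dPB y) => //; apply: s.
split; apply/negP => /subsetP s; move: un; rewrite inE (s _ u_in_Nv) ?orbT //.
Qed.

Lemma good_nse P B : Good P B -> ~~ sepy_end e P B.
Proof.
case=> dPB vP okP; apply/existsP => -[x /orP sx].
have xc : x \in P :|: B.
  by rewrite inE; case: sx => /subsetP /(_ x (Nc_refl x)) ->; rewrite ?orbT.
have [h1 h2] := ok_not_mono dPB (okP x xc).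
by case: sx; apply/negP.
Qed.

Lemma col_upd (P B : {set T}) x (c : bool) :
  (if c then x |: P else P) :|: (if c then B else x |: B) = x |: (P :|: B).
Proof. by case: c; rewrite ?setUA // (setUC P). Qed.

Lemma bi_mono P B y (d : bool) z : bi P B z ->
  bi (if d then y |: P else P) (if d then B else y |: B) z.
Proof.
by case/andP => h1 h2; apply/andP; case: d; split => //;
  apply: hasC_mono (subsetUr _ _) _.
Qed.

Lemma okb_upd P B y (d : bool) z : OKb P B z ->
  (u = y -> z = v -> bi (if d then y |: P else P) (if d then B else y |: B) v) ->
  OKb (if d then y |: P else P) (if d then B else y |: B) z.
Proof.
case/orP => [h _|/andP[/eqP zv un] H]; first by rewrite /OKb bi_mono.
case: (eqVneq u y) => [uy|uy]; first by rewrite /OKb zv H.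
by apply/orP; right; rewrite zv eqxx /= col_upd in_setU1 negb_or uy un.
Qed.

Lemma bi_pair P B y (d : bool) z t : y \in Nc e t -> z \in Nc e t ->
  z \in (if d then B else P) ->
  bi (if d then y |: P else P) (if d then B else y |: B) t.
Proof.
move=> yN zN zS; apply/andP; case: d zS => zS; split; apply/hasCP.
- by exists y; rewrite // in_setU1 eqxx.
- by exists z.
- by exists z.
- by exists y; rewrite // in_setU1 eqxx.
Qed.

Lemma no_u_p P B : v \in P -> ~~ legal e P B u true.
Proof.
move=> vP; apply/negP => /legalP[_ [w wN /negP]]; apply; apply/hasCP.
by exists v => //; rewrite Nc_sym; apply: (subsetP Nuv).
Qed.

Lemma disj_add P B y (d : bool) : [disjoint P & B] -> y \notin P :|: B ->
  [disjoint (if d then y |: P else P) & (if d then B else y |: B)].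
Proof.
move=> /disjP dPB yn; apply/disjP => z; case: d.
- rewrite in_setU1 => /orP[/eqP->|zP] zB; first by move: yn; rewrite inE zB orbT.
  exact: dPB zP zB.
- rewrite in_setU1 => zP /orP[/eqP zy|zB]; first by move: yn; rewrite -zy inE zP.
  exact: dPB zP zB.
Qed.

Lemma almost P B x (c : bool) : Good P B -> legal e P B x c ->
  [/\ [disjoint (if c then x |: P else P) & (if c then B else x |: B)],
      v \in (if c then x |: P else P) &
   forall z, z \in (if c then x |: P else P) :|: (if c then B else x |: B) ->
     z != x -> OKb (if c then x |: P else P) (if c then B else x |: B) z].
Proof.
move=> [dPB vP okP] lg; have /legalP[xn _] := lg.
split; first exact: disj_add.
  by case: c {lg}; rewrite ?inE vP ?orbT.
move=> z; rewrite col_upd in_setU1 => /orP[/eqP->|zc]; first by rewrite eqxx.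
move=> _; apply: okb_upd (okP z zc) _ => ux _.
move: lg; rewrite -ux; case: c => [lg|_]; first by move: (no_u_p B vP); rewrite lg.
apply/andP; split; apply/hasCP; first by exists v; rewrite ?Nc_refl.
by exists u; rewrite ?u_in_Nv ?inE ?eqxx.
Qed.

Lemma sepy_nse P B x (c : bool) : Good P B -> legal e P B x c ->
  ~~ sepy_end e (if c then x |: P else P) (if c then B else x |: B).
Proof.
move=> G lg; have [dPB' vP' okP'] := almost G lg.
have /legalP[xn [w wN wc]] := lg.
apply/existsP => -[z /orP sz].
have zc : z \in (if c then x |: P else P) :|: (if c then B else x |: B).
  by rewrite inE; case: sz => /subsetP /(_ z (Nc_refl z)) ->; rewrite ?orbT.
case: (eqVneq z x) => [zx|zx]; last first.
  have [h1 h2] := ok_not_mono dPB' (okP' z zc zx).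
  by case: sz; apply/negP.
subst z.
have sub : Nc e x \subset x |: (if c then P else B).
  case: c sz {zc okP' dPB' vP' lg wc} => -[] s //.
  - by move: xn; rewrite inE (subsetP s x (Nc_refl x)) orbT.
  - by move: xn; rewrite inE (subsetP s x (Nc_refl x)).
move/negP: wc; apply; apply/hasCP.
case: (eqVneq w x) => [wx|wx].
  subst w; have [y xy] := noiso x.
  have yN : y \in Nc e x by rewrite inE xy orbT.
  exists y => //; move: (subsetP sub y yN); rewrite in_setU1 => /orP[/eqP yx|] //.
  by move: xy; rewrite yx irr.
exists w; first exact: Nc_refl.
by move: (subsetP sub w wN); rewrite in_setU1 (negPf wx).
Qed.


Lemma fix_gen P B x (c : bool) : [disjoint P & B] -> v \in P ->
  x \in (if c then P else B) -> ~~ hasC (if c then B else P) x ->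
  ~~ sepy_end e P B -> (forall z, z \in P :|: B -> z != x -> OKb P B z) ->
  exists y, legal e P B y (~~ c) /\
    Good (if ~~ c then y |: P else P) (if ~~ c then B else y |: B).
Proof.
move=> dPB vP xS nx nse okP.
have nsub : ~~ (Nc e x \subset (if c then P else B)).
  move: nse; apply: contra => s; apply/existsP; exists x.
  by case: c s xS nx => s _ _; rewrite s ?orbT.
have [y yN yS] := subsetPn nsub.
have yO : y \notin (if c then B else P).
  by apply: contra nx => yO; apply/hasCP; exists y.
have yn : y \notin P :|: B.
  by case: c yS yO {nsub xS nx} => yS yO; rewrite inE negb_or ?yS ?yO.
have yx : y != x by apply/eqP => yx; move: yS; rewrite yx xS.
exists y; split.
  apply/legalP; split => //; exists x; first by rewrite Nc_sym.
  by case: c {nsub yS yO xS} nx.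
split.
- exact: disj_add.
- by case: c {nsub yS yO xS nx}; rewrite ?in_setU1 vP ?orbT.
- move=> z; rewrite col_upd in_setU1 => /orP[/eqP->|zc].
    apply/orP; left; apply: (bi_pair (z := x)); [exact: Nc_refl | by rewrite Nc_sym |].
    by case: c {nsub yS yO nx} xS.
  case: (eqVneq z x) => [->|zx].
    apply/orP; left; apply: (bi_pair (z := x)); [exact: yN | exact: Nc_refl |].
    by case: c {nsub yS yO nx} xS.
  apply: okb_upd (okP z zc zx) _ => uy _.
  apply/andP; split; apply/hasCP.
    by exists v; rewrite ?Nc_refl //; case: c {nsub yS yO xS nx}; rewrite ?in_setU1 vP ?orbT.
  case: c {nsub yS yO} xS nx => xS nx /=.
    by exists y; rewrite -?uy ?u_in_Nv // in_setU1 eqxx.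
  exfalso; move/negP: nx; apply; apply/hasCP; exists v => //.
  rewrite Nc_sym; apply: (subsetP Nuv); rewrite uy Nc_sym //.
Qed.

Lemma conn_step (C : {set T}) w0 : v \in C -> ~~ hasC C w0 ->
  exists w y, [/\ ~~ hasC C w, e w y & hasC C y].
Proof.
move=> vC nw0.
case: (boolP [exists w, exists y, [&& ~~ hasC C w, e w y & hasC C y]]).
  by move=> /existsP[w /existsP[y /and3P[h1 h2 h3]]]; exists w, y.
move=> nex; exfalso.
have cl : closed e [set w | ~~ hasC C w].
  move=> x y exy; rewrite !inE.
  apply/idP/idP => hx; apply/negP => hy.
    by move/negP: nex; apply; apply/existsP; exists x; apply/existsP; exists y; rewrite hx exy hy.
  by move/negP: nex; apply; apply/existsP; exists y; apply/existsP; exists x; rewrite hx sym exy hy.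
have := closed_connect cl (conn w0 v); rewrite !inE nw0 => /esym/negP; apply.
by apply/hasCP; exists v => //; exact: Nc_refl.
Qed.

Lemma free_move P B : Good P B -> ~~ dom_end e P B ->
  exists y (d : bool), legal e P B y d /\
    Good (if d then y |: P else P) (if d then B else y |: B).
Proof.
move=> [dPB vP okP] nde.
case: (boolP (bi P B v || (u \in P :|: B))) => [allv|].
  have allbi : forall z, z \in P :|: B -> bi P B z.
    move=> z zc; case/orP: (okP z zc) => // /andP[/eqP zv un].
    by rewrite zv; case/orP: allv => //; rewrite (negPf un).
  have [w0 w0b] : exists w0, ~~ bi P B w0.
    move: nde; rewrite /dom_end /dominating negb_and => /orP[] /forallPn [w hw];
      exists w; rewrite /bi negb_and; apply/orP; [left|right]; exact: hw.
  have w0n : w0 \notin P :|: B by apply: contra w0b; apply: allbi.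
  have Gnew : forall y (d : bool), y \notin P :|: B ->
      bi (if d then y |: P else P) (if d then B else y |: B) y ->
      Good (if d then y |: P else P) (if d then B else y |: B).
    move=> y d yn hb; split; first exact: disj_add.
      by case: d {hb}; rewrite ?in_setU1 vP ?orbT.
    move=> z; rewrite col_upd in_setU1 => /orP[/eqP->|zc]; first by rewrite /OKb hb.
    by rewrite /OKb bi_mono ?allbi.
  have colour : forall z, z \in P :|: B ->
      z \in (if z \notin P then B else P).
    move=> z zc; case: (boolP (z \in P)) => //= zP.
    by move: zc; rewrite inE (negPf zP).
  case: (boolP (hasC (P :|: B) w0)) => [/hasCP[z zN zc]|nw].
    exists w0, (z \notin P); split.
      apply/legalP; split => //; exists w0; first exact: Nc_refl.
      have zS := colour z zc.
      move: w0b; rewrite /bi; case: (z \notin P) zS => zS /=.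
        by rewrite andbC; case: (boolP (hasC B w0)) => //; move/hasCP; case; exists z.
      by case: (boolP (hasC P w0)) => //; move/hasCP; case; exists z.
    by apply: Gnew => //; apply: bi_pair zN (colour z zc); exact: Nc_refl.
  have vc : v \in P :|: B by rewrite inE vP.
  have [w [y [nwc ewy yc]]] := conn_step vc nw.
  have /hasCP[z zN zc] := yc.
  have yNw : y \in Nc e w by rewrite inE ewy orbT.
  have yn : y \notin P :|: B by apply: contra nwc => yc'; apply/hasCP; exists y.
  exists y, (z \notin P); split.
    apply/legalP; split => //; exists w; first by rewrite Nc_sym.
    apply: contra nwc; apply: hasC_mono.
    by case: (z \notin P); [exact: subsetUl | exact: subsetUr].
  by apply: Gnew => //; apply: bi_pair zN (colour z zc); exact: Nc_refl.
rewrite negb_or => /andP[nbv un].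
have nBv : ~~ hasC B v.
  move: nbv; rewrite /bi negb_and => /orP[] // /hasCP[]; exists v => //; exact: Nc_refl.
exists u, false; split.
  by apply/legalP; split => //; exists v => //; exact: v_in_Nu.
split; first exact: (@disj_add P B u false dPB un).
  done.
move=> z; rewrite (col_upd P B u false) in_setU1 => /orP[/eqP->|zc].
  apply/orP; left; apply: (@bi_pair P B u false v u); by rewrite ?Nc_refl ?v_in_Nu.
apply: (@okb_upd P B u false z (okP z zc)) => _ _.
apply: (@bi_pair P B u false v v); by rewrite ?Nc_refl ?u_in_Nv.
Qed.

Lemma dom_step_gen P B x : [disjoint P & B] -> v \in P -> x \in P :|: B ->
  ~~ sepy_end e P B -> (forall z, z \in P :|: B -> z != x -> OKb P B z) ->
  ~~ dom_end e P B ->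
  exists y (d : bool), legal e P B y d /\
    Good (if d then y |: P else P) (if d then B else y |: B).
Proof.
move=> dPB vP xc nse okP nde.
case: (boolP (OKb P B x)) => okx.
  apply: free_move => //; split => // z zc.
  by case: (eqVneq z x) => [->|zx] //; apply: okP.
have nbx : ~~ bi P B x by apply: contra okx => h; rewrite /OKb h.
case: (boolP (x \in P)) => xP.
  have nx : ~~ hasC B x.
    move: nbx; rewrite /bi negb_and => /orP[] // /hasCP[]; exists x => //; exact: Nc_refl.
  by have [y [lg G]] := @fix_gen P B x true dPB vP xP nx nse okP; exists y, false.
have xB : x \in B by move: xc; rewrite inE (negPf xP).
have nx : ~~ hasC P x.
  move: nbx; rewrite /bi negb_and => /orP[] // /hasCP[]; exists x => //; exact: Nc_refl.
by have [y [lg G]] := @fix_gen P B x false dPB vP xB nx nse okP; exists y, true.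
Qed.

Lemma cnt_dec S S' x : x \notin S -> x \in S' -> S \subset S' -> #|~: S'| < #|~: S|.
Proof.
move=> xS xS' sub; apply: proper_card; apply/properP; split; first by rewrite setCS.
by exists x; rewrite !inE ?negbK.
Qed.

Lemma sepy_turn n : forall P B, #|~: (P :|: B)| < n -> Good P B -> DomWins e P B false.
Proof.
elim: n => [//|n IH] P B cnt G.
have nse := good_nse G.
case: (boolP (dom_end e P B)) => de; first by apply: DW_end.
apply: DW_sepy => // x c lg.
have nse' := sepy_nse G lg.
case: (boolP (dom_end e (if c then x |: P else P) (if c then B else x |: B))) => de';
  first by apply: DW_end.
apply: DW_dom => //.
have [dPB' vP' okP'] := almost G lg.
have xc' : x \in (if c then x |: P else P) :|: (if c then B else x |: B).
  by rewrite col_upd in_setU1 eqxx.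
have [y [d [lg' G']]] := dom_step_gen dPB' vP' xc' nse' okP' de'.
exists y, d; split => //; apply: IH G'.
have /legalP[xn _] := lg.
rewrite ltnS in cnt; rewrite !col_upd; apply: leq_trans _ cnt.
apply: cnt_dec xn _ _; first by rewrite !in_setU1 eqxx orbT.
by apply/subsetP => z zc; rewrite !in_setU1 zc !orbT.
Qed.

Lemma start : DomWins e set0 set0 true.
Proof.
apply: DW_dom.
- by apply/existsP => -[x /orP[] /subsetP /(_ x (Nc_refl x))]; rewrite inE.
- rewrite /dom_end /dominating; apply/negP => /andP[/forallP /(_ u) /negP H _].
  by apply: H; apply/disjP => z _; rewrite inE.
exists v, true; split.
  apply/legalP; split; first by rewrite !inE.
  exists v; first exact: Nc_refl.
  by rewrite /hasC negbK; apply/disjP => z _; rewrite inE.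
apply: (@sepy_turn #|~: ((v |: set0) :|: set0)|.+1) => //.
split.
- by apply/disjP => z _; rewrite inE.
- by rewrite in_setU1 eqxx.
- move=> z; rewrite setU0 in_setU1 in_set0 orbF => /eqP ->.
  by apply/orP; right; rewrite eqxx /= setU0 in_setU1 in_set0 orbF.
Qed.

End Proof8.


Theorem theorem8 (T : finType) (e : rel T) :
  symmetric e -> irreflexive e ->
  (forall x y : T, connect e x y) ->
  (forall x : T, exists y : T, e x y) ->
  forall u v : T, u != v -> Nc e u \subset Nc e v ->
  DomWins e set0 set0 true.
Proof.
move=> sym irr conn noiso u v uv Nuv.
exact: (start sym irr conn noiso uv Nuv).
Qed.
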